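(* Let $m, r$ be positive integers with $r$ even and $m \geq 4$. Then the complete graph $K_4$ is (isomorphic to) a subgraph of $G(\mathbb{Z}^m, \sqrt{r})$.
   Context: For $X \subseteq \mathbb{R}^m$ and $d>0$, $G(X,d)$ denotes the Euclidean distance graph with vertex set $X$ in which two vertices are adjacent if and only if their Euclidean distance is exactly $d$. *)

(* Defs.v *)
From mathcomp Require Import all_boot all_order all_algebra.
From mathcomp Require Import reals.
Set Implicit Arguments. Unset Strict Implicit. Unset Printing Implicit Defensive.
Import Order.TTheory GRing.Theory Num.Theory.
Local Open Scope ring_scope.

Definition euclid_dist (R : realType) (m : nat) (x y : 'rV[R]_m) : R :=
  Num.sqrt (\sum_(i < m) (x ord0 i - y ord0 i) ^+ 2).

Definition Zlattice (R : realType) (m : nat) (x : 'rV[R]_m) : Prop :=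
  forall i : 'I_m, exists z : int, x ord0 i = z%:~R.

Definition edg_vertex (R : realType) (m : nat) (X : 'rV[R]_m -> Prop)
  (x : 'rV[R]_m) : Prop := X x.
Definition edg_adj (R : realType) (m : nat) (X : 'rV[R]_m -> Prop) (d : R)
  (x y : 'rV[R]_m) : Prop := X x /\ X y /\ euclid_dist x y = d.

Definition contains_Kn (R : realType) (m : nat) (X : 'rV[R]_m -> Prop) (d : R)
  (n : nat) : Prop :=
  exists f : 'I_n -> 'rV[R]_m,
    injective f /\ (forall i, edg_vertex X (f i)) /\
    (forall i j, i != j -> edg_adj X d (f i) (f j)).

(* Main.v *)
Require Import Defs.
From mathcomp Require Import all_boot all_order all_algebra.
From mathcomp Require Import reals.
From mathcomp Require Import ring lra zify.
Set Implicit Arguments. Unset Strict Implicit. Unset Printing Implicit Defensive.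
Import Order.TTheory GRing.Theory Num.Theory.
Local Open Scope ring_scope.

Definition sq4 (n : int) := exists a b c d : int, n = a^+2 + b^+2 + c^+2 + d^+2.

Lemma sq4M x y : sq4 x -> sq4 y -> sq4 (x * y).
Proof.
move=> [x1 [x2 [x3 [x4 ->]]]] [y1 [y2 [y3 [y4 ->]]]].
exists (x1*y1+x2*y2+x3*y3+x4*y4), (x1*y2 - x2*y1 + x3*y4 - x4*y3),
  (x1*y3 - x3*y1 + x4*y2 - x2*y4), (x1*y4 - x4*y1 + x2*y3 - x3*y2).
ring.
Qed.

Lemma round_exists (x m : int) : 0 < m -> exists t : int, - m < 2 * (x - m * t) <= m.
Proof.
move=> m0.
have := divz_eq x m; have := modz_ge0 x (lt0r_neq0 m0); have := ltz_pmod x m0.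
set q := (x %/ m)%Z; set s := (x %% m)%Z => H1 H2 H3.
case: (leP (2 * s) m) => H.
  exists q; lia.
exists (q + 1); lia.
Qed.

Lemma sq_eq (y m : int) : (2*y)^+2 = m^+2 -> 2 * y = m \/ 2 * y = - m.
Proof.
move/eqP; rewrite eqf_sqr => /orP [/eqP|/eqP]; auto.
Qed.

Lemma bnd (y m : int) : - m < 2 * y -> 2 * y <= m -> 4 * y^+2 <= m^+2.
Proof. move=> a b; nia. Qed.

Lemma rbnd (m r y1 y2 y3 y4 : int) : 0 < m ->
  y1^+2 + y2^+2 + y3^+2 + y4^+2 = m * r ->
  4 * y1^+2 <= m^+2 -> 4 * y2^+2 <= m^+2 -> 4 * y3^+2 <= m^+2 -> 4 * y4^+2 <= m^+2 ->
  0 <= r <= m.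
Proof. move=> m0 E b1 b2 b3 b4.
have h1 := sqr_ge0 y1; have h2 := sqr_ge0 y2; have h3 := sqr_ge0 y3; have h4 := sqr_ge0 y4.
apply/andP; split; nia. Qed.

Lemma r0case (m y1 y2 y3 y4 : int) : 0 < m ->
  y1^+2 + y2^+2 + y3^+2 + y4^+2 = m * 0 -> y1 = 0 /\ y2 = 0 /\ y3 = 0 /\ y4 = 0.
Proof. move=> m0 E.
have h1 := sqr_ge0 y1; have h2 := sqr_ge0 y2; have h3 := sqr_ge0 y3; have h4 := sqr_ge0 y4.
rewrite mulr0 in E.
have : y1^+2 = 0 by lia. have : y2^+2 = 0 by lia. have : y3^+2 = 0 by lia. have : y4^+2 = 0 by lia.
by move=> /eqP; rewrite sqrf_eq0 => /eqP -> /eqP; rewrite sqrf_eq0 => /eqP -> /eqP;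
 rewrite sqrf_eq0 => /eqP -> /eqP; rewrite sqrf_eq0 => /eqP ->.
Qed.

Lemma rmcase (m y1 y2 y3 y4 : int) : 0 < m ->
  y1^+2 + y2^+2 + y3^+2 + y4^+2 = m * m ->
  4 * y1^+2 <= m^+2 -> 4 * y2^+2 <= m^+2 -> 4 * y3^+2 <= m^+2 -> 4 * y4^+2 <= m^+2 ->
  (2*y1)^+2 = m^+2 /\ (2*y2)^+2 = m^+2 /\ (2*y3)^+2 = m^+2 /\ (2*y4)^+2 = m^+2.
Proof. move=> m0 E b1 b2 b3 b4.
rewrite !exprMn -!expr2 in E *. rewrite (_ : 2^+2 = 4) //. lia. Qed.

Lemma ndiv (p m : nat) : prime p -> (1 < m)%N -> (m < p)%N ->
  forall k : int, p%:Z = m%:Z * k -> False.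
Proof.
  move=> pr m1 mp k Ek.
  have : (m %| p)%N.
    have : (m%:Z %| p%:Z)%Z by rewrite Ek dvdz_mulr.
    by [].
  case/primeP: pr => _ /(_ m) H /H /orP[]/eqP; lia.
Qed.

Lemma descent_step (p m : nat) (x1 x2 x3 x4 : int) :
  prime p -> (1 < m)%N -> (m < p)%N ->
  (m * p)%:Z = x1^+2 + x2^+2 + x3^+2 + x4^+2 ->
  exists r : nat, (0 < r)%N /\ (r < m)%N /\ sq4 (r * p)%:Z.
Proof.
move=> pr m1 mp E.
have m0 : (0 : int) < m%:Z by lia.
have [t1 /andP[a1 b1]] := round_exists x1 m0.
have [t2 /andP[a2 b2]] := round_exists x2 m0.
have [t3 /andP[a3 b3]] := round_exists x3 m0.
have [t4 /andP[a4 b4]] := round_exists x4 m0.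
set y1 := x1 - m%:Z * t1 in a1 b1.
set y2 := x2 - m%:Z * t2 in a2 b2.
set y3 := x3 - m%:Z * t3 in a3 b3.
set y4 := x4 - m%:Z * t4 in a4 b4.
set r : int := p%:Z - (2*x1*t1 - m%:Z * t1^+2) - (2*x2*t2 - m%:Z * t2^+2)
   - (2*x3*t3 - m%:Z * t3^+2) - (2*x4*t4 - m%:Z * t4^+2).
have Ey : y1^+2 + y2^+2 + y3^+2 + y4^+2 = m%:Z * r.
  have Ex : m%:Z * p%:Z = x1^+2 + x2^+2 + x3^+2 + x4^+2 by rewrite -E PoszM.
  rewrite /y1 /y2 /y3 /y4 /r !mulrBr Ex; ring.
have s1 := bnd a1 b1.
have s2 := bnd a2 b2.
have s3 := bnd a3 b3.
have s4 := bnd a4 b4.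
have /andP[r0 rm] := rbnd m0 Ey s1 s2 s3 s4.
have Ep : p%:Z = r + 2 * (y1 * t1 + y2 * t2 + y3 * t3 + y4 * t4)
   + m%:Z * (t1^+2 + t2^+2 + t3^+2 + t4^+2).
  rewrite /r /y1 /y2 /y3 /y4; ring.
have nd := ndiv pr m1 mp.
have Dy1 : y1 = x1 - m%:Z * t1 by [].
have Dy2 : y2 = x2 - m%:Z * t2 by [].
have Dy3 : y3 = x3 - m%:Z * t3 by [].
have Dy4 : y4 = x4 - m%:Z * t4 by [].
clearbody y1 y2 y3 y4 r.
have [rz|rnz] := eqVneq r 0.
  have [z1 [z2 [z3 z4]]] := r0case m0 (etrans Ey (congr1 _ rz)).
  exfalso; apply: (nd (t1^+2 + t2^+2 + t3^+2 + t4^+2)).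
  by rewrite Ep rz z1 z2 z3 z4; ring.
have [rmz|rmnz] := eqVneq r m%:Z.
  have [e1 [e2 [e3 e4]]] := rmcase m0 (etrans Ey (congr1 _ rmz)) s1 s2 s3 s4.
  have f : forall (y t : int), (2*y)^+2 = m%:Z^+2 -> exists e, 2 * (y * t) = m%:Z * e.
    move=> y t /sq_eq [] h; [exists t | exists (-t)]; rewrite mulrA h; ring.
  have [g1 h1] := f _ t1 e1.
  have [g2 h2] := f _ t2 e2.
  have [g3 h3] := f _ t3 e3.
  have [g4 h4] := f _ t4 e4.
  exfalso; apply: (nd (1 + g1 + g2 + g3 + g4 + (t1^+2 + t2^+2 + t3^+2 + t4^+2))).
  rewrite Ep rmz !mulrDr h1 h2 h3 h4; ring.
exists `|r|%N; split; first by move: r0 rnz; clear; lia.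
split; first by move: r0 rmnz rm; clear; lia.
(* Euler *)
set w1 := p%:Z - (x1*t1+x2*t2+x3*t3+x4*t4).
set w2 := - x1*t2 + x2*t1 - x3*t4 + x4*t3.
set w3 := - x1*t3 + x3*t1 - x4*t2 + x2*t4.
set w4 := - x1*t4 + x4*t1 - x2*t3 + x3*t2.
exists w1, w2, w3, w4.
have key : (m%:Z * m%:Z) * ((`|r|%N * p)%N%:Z) = (m%:Z * m%:Z) * (w1^+2 + w2^+2 + w3^+2 + w4^+2).
  have -> : (`|r|%N * p)%N%:Z = r * p%:Z by rewrite PoszM gez0_abs.
  have Ex : m%:Z * p%:Z = x1^+2 + x2^+2 + x3^+2 + x4^+2 by rewrite -E PoszM.
  have -> : m%:Z * m%:Z * (r * p%:Z) = (m%:Z * p%:Z) * (m%:Z * r) by ring.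
  rewrite Ex -Ey Dy1 Dy2 Dy3 Dy4 /w1 /w2 /w3 /w4.
  have Hp : forall z : int, m%:Z * (p%:Z - z) = x1^+2 + x2^+2 + x3^+2 + x4^+2 - m%:Z * z.
    by move=> z; rewrite mulrBr Ex.
  move: Hp; set P := p%:Z => Hp.
  transitivity ((m%:Z * (P - (x1 * t1 + x2 * t2 + x3 * t3 + x4 * t4)))^+2 +
     (m%:Z * w2)^+2 + (m%:Z * w3)^+2 + (m%:Z * w4)^+2); last by rewrite /w2 /w3 /w4; ring.
  rewrite Hp /w2 /w3 /w4; ring.
apply: (mulfI _ key); move: m1; clear; lia.
Qed.
Local Close Scope ring_scope.

Lemma sqmod_inj p x y : prime p -> (2 * x < p)%N -> (2 * y < p)%N ->
  x ^ 2 %% p = y ^ 2 %% p -> x = y.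
Proof.
move=> pr hx hy.
wlog le: x y hx hy / (y <= x)%N.
  move=> W E; case: (leqP y x) => h; first exact: W.
  by symmetry; apply: W => //; lia.
move=> /eqP E.
have le2 : (y ^ 2 <= x ^ 2)%N by rewrite leq_exp2r.
rewrite eqn_mod_dvd // in E.
have : (x ^ 2 - y ^ 2 = (x - y) * (x + y))%N by rewrite -subn_sqr.
move=> e; rewrite e Euclid_dvdM // in E.
have p0 := prime_gt1 pr.
case/orP: E => D.
  case: (posnP (x - y)) => h0; first lia.
  have := dvdn_leq h0 D; lia.
case: (posnP (x + y)) => h0; first lia.
have := dvdn_leq h0 D; lia.
Qed.

Lemma exists_xy p : prime p -> odd p ->
  exists x y, [/\ (2 * x < p)%N, (2 * y < p)%N & (p %| x ^ 2 + y ^ 2 + 1)%N].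
Proof.
move=> pr op.
have p0 := prime_gt1 pr.
set h := p./2.
have ph : p = h.*2.+1 by rewrite /h -{1}(odd_double_half p) op.
set s1 := map (fun x => x ^ 2 %% p) (iota 0 h.+1).
set s2 := map (fun y => p.-1 - y ^ 2 %% p) (iota 0 h.+1).
have u1 : uniq s1.
  rewrite map_inj_in_uniq ?iota_uniq // => x y; rewrite !mem_iota => hx hy.
  apply: sqmod_inj => //; lia.
have u2 : uniq s2.
  rewrite map_inj_in_uniq ?iota_uniq // => x y; rewrite !mem_iota => hx hy E.
  apply: (sqmod_inj pr); try lia.
case: (boolP (has (mem s1) s2)) => H.
  case/hasP: H => z /mapP [y hy Ez] /mapP [x hx E].
  rewrite Ez in E.
  exists x, y; move: hx hy; rewrite !mem_iota => hx hy; split; try lia.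
  have := ltn_pmod (y ^ 2) (ltnW p0) => lt.
  have E2 : (x ^ 2 %% p + y ^ 2 %% p + 1 = p)%N by lia.
  rewrite /dvdn {1}(divn_eq (x ^ 2) p) {1}(divn_eq (y ^ 2) p).
  have -> : (x ^ 2 %/ p * p + x ^ 2 %% p + (y ^ 2 %/ p * p + y ^ 2 %% p) + 1 = (x ^ 2 %/ p + y ^ 2 %/ p) * p + (x ^ 2 %% p + y ^ 2 %% p + 1))%N by rewrite mulnDl; lia.
  by rewrite modnMDl E2 modnn.
exfalso.
have : uniq (s1 ++ s2) by rewrite cat_uniq u1 u2 H.
have sub : {subset s1 ++ s2 <= iota 0 p}.
  move=> z; rewrite mem_cat mem_iota => /orP [] /mapP [x _ ->].
    by have := ltn_pmod (x ^ 2) (ltnW p0); lia.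
  by have := ltn_pmod (x ^ 2) (ltnW p0); lia.
move/uniq_leq_size => /(_ _ sub).
rewrite size_cat !size_map !size_iota.
lia.
Qed.
Local Open Scope ring_scope.

Lemma descent (p : nat) : prime p -> forall m : nat, (0 < m)%N -> (m < p)%N ->
  sq4 (m * p)%N%:Z -> sq4 p%:Z.
Proof.
move=> pr m; elim: m {-2}m (leqnn m) => [|n IH] m le m0 mp.
  by move: le m0; clear; lia.
case: (leqP m 1) => m1.
  have -> : m = 1%N by move: m0 m1; clear; lia.
  by rewrite mul1n.
move=> [x1 [x2 [x3 [x4 E]]]].
have [r [r0 [rm S]]] := descent_step pr m1 mp E.
apply: (IH r) => //; move: rm le mp; clear; lia.
Qed.

Lemma prime_sq4 p : prime p -> sq4 p%:Z.
Proof.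
move=> pr.
have [->|op] := even_prime pr.
  by exists 1, 1, 0, 0.
have [x [y [hx hy D]]] := exists_xy pr op.
have p1 := prime_gt1 pr.
set n := (x ^ 2 + y ^ 2 + 1)%N in D.
have En : (n %/ p * p = n)%N by rewrite divnK.
have n0 : (0 < n)%N by rewrite /n addn1.
have np : (n < p * p)%N by rewrite /n; nia.
apply: (descent pr (m := n %/ p)).
- by rewrite divn_gt0 ?(ltnW p1) // dvdn_leq.
- by rewrite ltn_divLR ?(ltnW p1).
- rewrite En /n; exists x%:Z, y%:Z, 1, 0.
  by rewrite -!mulnn !PoszD !PoszM expr0n /= addr0 !expr2.
Qed.

Lemma lagrange (n : nat) : sq4 n%:Z.
Proof.
elim: n {-2}n (leqnn n) => [|k IH] n le.
  have -> : n = 0%N by move: le; clear; lia.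
  by exists 0, 0, 0, 0; rewrite expr0n /= !addr0.
case: (leqP n 1) => n1.
  case: n n1 {le} => [|[|//]] _; first by exists 0, 0, 0, 0; rewrite expr0n /= !addr0.
  by exists 1, 0, 0, 0; rewrite expr0n /= !addr0.
have pp := pdiv_prime n1.
have dv := pdiv_dvd n.
have En : (n %/ pdiv n * pdiv n = n)%N by rewrite divnK.
rewrite -En PoszM; apply: sq4M; last exact: prime_sq4.
apply: IH.
have : (n %/ pdiv n < n)%N by rewrite ltn_Pdiv ?prime_gt1 //; lia.
move: le; clear; lia.
Qed.

Definition cf (a b c d : int) (i j : nat) : int :=
  match i, j with
  | 1, 0 => a - b | 1, 1 => b + a | 1, 2 => c - d | 1, 3 => d + c
  | 2, 0 => a - c | 2, 1 => b + d | 2, 2 => c + a | 2, 3 => d - b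
  | 3, 0 => - b - c | 3, 1 => a + d | 3, 2 => a - d | 3, 3 => c - b
  | _, _ => 0 end.

Lemma cf_big (a b c d : int) i l : (3 < l)%N -> cf a b c d i l = 0.
Proof. by case: i => [|[|[|[|i]]]]; case: l => [|[|[|[|l]]]]. Qed.

Lemma sum_cf (m : nat) (a b c d : int) (i j : 'I_4) : (4 <= m)%N -> i != j ->
  \sum_(l < m) (cf a b c d i l - cf a b c d j l) ^+ 2 =
  2 * (a^+2 + b^+2 + c^+2 + d^+2).
Proof.
move=> m4 ij.
rewrite -(big_mkord xpredT (fun l => (cf a b c d i l - cf a b c d j l) ^+ 2)).
rewrite (big_cat_nat _ (n := 4)) //=.
rewrite [X in _ + X = _](_ : _ = 0) ?addr0; last first.
  rewrite big_nat_cond big1 // => l /ssrbool.andP[] /ssrbool.andP[] h _ _.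
  by rewrite !cf_big // subrr expr0n.
rewrite !big_nat_recl // big_geq // addr0.
case: i j ij => [[|[|[|[|i]]]] hi] [[|[|[|[|j]]]] hj] //= _; ring.
Qed.

Theorem lemma3 (R : realType) (m r : nat) :
  (0 < r)%N -> ~~ odd r -> (4 <= m)%N ->
  contains_Kn (@Zlattice R m) (Num.sqrt (r%:R : R)) 4.
Proof.
move=> r0 er m4.
case: (lagrange (r./2)%N) => a [b [c [d Ek]]].
have Er : r%:Z = 2 * (a^+2 + b^+2 + c^+2 + d^+2).
  rewrite -Ek -{1}(odd_double_half r) (negbTE er) add0n -muln2 PoszM; ring.
pose f (i : 'I_4) : 'rV[R]_m := \row_(l < m) (cf a b c d i l)%:~R.
have dist : forall i j : 'I_4, i != j -> euclid_dist (f i) (f j) = Num.sqrt (r%:R : R).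
  move=> i j ij; rewrite /euclid_dist; congr Num.sqrt.
  transitivity ((\sum_(l < m) (cf a b c d i l - cf a b c d j l) ^+ 2)%:~R : R).
    rewrite rmorph_sum; apply: eq_bigr => l _.
    by rewrite !mxE rmorphXn rmorphB.
  by rewrite sum_cf // -Er.
have Zl : forall i, Zlattice (f i).
  by move=> i l; exists (cf a b c d i l); rewrite mxE.
exists f; split; last split.
- move=> i j Eij; apply/eqP; apply/negPn/negP => ij.
  have := dist i j ij; rewrite Eij /euclid_dist.
  rewrite (eq_bigr (fun _ => 0)) => [|l _]; last by rewrite subrr expr0n.
  rewrite big1 // sqrtr0 => /eqP; rewrite eq_sym sqrtr_eq0 => H.
  by move: H; rewrite real_leNgt ?ltr0n ?r0 // ?realE ?ler0n.
- exact: Zl.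
- move=> i j ij; split; [exact: Zl | split; [exact: Zl | exact: dist]].
Qed.
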